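(* Every commutative, pseudo Connes amenable dual Banach algebra is weakly Connes amenable.
   Context: A dual Banach algebra is a Banach algebra $\mathfrak{A}$ which is the dual of a Banach space $\mathfrak{A}_*$ and whose multiplication is separately $w^*$-continuous. For a Banach $\mathfrak{A}$-bimodule $E$, $\sigma wc(E)$ is the set of $x\in E$ such that $a\mapsto a\cdot x$, $a\mapsto x\cdot a$ are continuous from $(\mathfrak{A},w^* )$ to $(E,\sigma(E,E^* ))$. Let $\pi:\mathfrak{A}\hat\otimes\mathfrak{A}\to\mathfrak{A}$, $\pi(a\otimes b)=ab$; since $\pi^*(\mathfrak{A}_* )\subseteq\sigma wc((\mathfrak{A}\hat\otimes\mathfrak{A})^* )$, taking adjoints gives $\pi_{\sigma wc}:\sigma wc((\mathfrak{A}\hat\otimes\mathfrak{A})^* )^*\to\mathfrak{A}$ extending $\pi$. Let $\zeta:\mathfrak{A}\hat\otimes\mathfrak{A}\to\sigma wc((\mathfrak{A}\hat\otimes\mathfrak{A})^* )^*$ be the canonical embedding into the bidual followed by restriction. $\mathfrak{A}$ is pseudo Connes amenable if there is a net $(m_\alpha)$ in $\mathfrak{A}\hat\otimes\mathfrak{A}$ with $a\cdot\zeta(m_\alpha)-\zeta(m_\alpha)\cdot a\to0$ ($w^*$) and $a\pi_{\sigma wc}(m_\alpha)\to a$ ($w^*$) for all $a\in\mathfrak{A}$. A derivation $D:\mathfrak{A}\to F$ is a continuous linear map with $D(ab)=D(a)\cdot b+a\cdot D(b)$; inner if $D(a)=a\cdot x-x\cdot a$ for some $x\in F$. Let $j_{\mathfrak{A}}:\mathfrak{A}^*\to\sigma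 wc(\mathfrak{A})^*$ be the adjoint of the inclusion $\sigma wc(\mathfrak{A})\hookrightarrow\mathfrak{A}$. $\mathfrak{A}$ is weakly Connes amenable if for every derivation $D:\mathfrak{A}\to\mathfrak{A}^*$ such that $j_{\mathfrak{A}}\circ D:\mathfrak{A}\to\sigma wc(\mathfrak{A})^*$ is $w^*$-$w^*$ continuous, $j_{\mathfrak{A}}\circ D$ is inner. *)

(* Defs.v *)
From mathcomp Require Import all_boot all_order all_algebra.
From mathcomp Require Import all_classical all_reals all_analysis.
From mathcomp Require Import complex.
Import numFieldNormedType.Exports.
Import GRing.Theory Num.Theory.

Set Implicit Arguments.
Unset Strict Implicit.
Unset Printing Implicit Defensive.

Local Open Scope ring_scope.
Local Open Scope complex_scope.

Section Defs.
Variable R : realType.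
Local Notation K := R[i].

Definition directed (I : Type) (le : I -> I -> Prop) : Prop :=
  [/\ inhabited I, (forall i, le i i),
      (forall i j k, le i j -> le j k -> le i k) &
      (forall i j, exists k, le i k /\ le j k)].

Definition net_conv (I : Type) (le : I -> I -> Prop) (u : I -> K) (l : K) : Prop :=
  forall e : K, 0 < e -> exists i0, forall i, le i0 i -> `|u i - l| < e.

Definition bdd_lin_fun (V : normedModType K) (f : V -> K) : Prop :=
  (forall (k : K) (x y : V), f (k *: x + y) = k * f x + f y) /\
  exists C : K, forall x, `|f x| <= C * `|x|.

Section Algebra.
Variables (A P : completeNormedModType K).

Definition banach_algebra (mul : A -> A -> A) : Prop :=
  [/\ (forall a b c, mul (mul a b) c = mul a (mul b c)),
      (forall (k : K) a b c, mul (k *: a + b) c = k *: mul a c + mul b c),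
      (forall (k : K) a b c, mul c (k *: a + b) = k *: mul c a + mul c b) &
      (forall a b, `|mul a b| <= `|a| * `|b|)].

Variable pr : A -> P -> K.

(* pr identifies A isometrically with the dual (P)^* of the Banach space P:
   pr a is a linear functional on P of norm ||a||, and every bounded linear
   functional on P is of the form pr a. *)
Definition is_predual : Prop :=
  [/\ (forall (k : K) a b p, pr (k *: a + b) p = k * pr a p + pr b p),
      (forall (k : K) a p q, pr a (k *: p + q) = k * pr a p + pr a q),
      (forall a p, `|pr a p| <= `|a| * `|p|),
      (forall a (e : K), 0 < e -> exists p, `|p| <= 1 /\ `|a| - e < `|pr a p|) &
      (forall f : P -> K, bdd_lin_fun f -> exists a, forall p, pr a p = f p)].

(* w*-convergence (topology sigma(A, A_* )) of a net in A *)
Definition wconv (I : Type) (le : I -> I -> Prop) (x : I -> A) (a : A) : Prop :=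
  forall p : P, net_conv le (fun i => pr (x i) p) (pr a p).

Definition wstar_cont (f : A -> A) : Prop :=
  forall (I : Type) (le : I -> I -> Prop) (x : I -> A) (a : A),
    directed le -> wconv le x a -> wconv le (fun i => f (x i)) (f a).

Variable mul : A -> A -> A.

Definition dual_banach_algebra : Prop :=
  [/\ banach_algebra mul, is_predual &
      forall a, wstar_cont (mul a) /\ wstar_cont (fun b => mul b a)].

Definition commutative_alg : Prop := forall a b, mul a b = mul b a.

(* x in sigma wc(A) iff a |-> a x and a |-> x a are continuous from (A, w* )
   to (A, sigma(A, A^* )). *)
Definition sigmawcA (x : A) : Prop :=
  forall (I : Type) (le : I -> I -> Prop) (u : I -> A) (a : A),
    directed le -> wconv le u a ->
    forall phi : A -> K, bdd_lin_fun phi ->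
      net_conv le (fun i => phi (mul (u i) x)) (phi (mul a x)) /\
      net_conv le (fun i => phi (mul x (u i))) (phi (mul x a)).

(* D a is the functional D(a) in A^*; the dual module actions are
   (a . f)(x) = f (x a) and (f . a)(x) = f (a x). *)
Definition derivation_to_dual (D : A -> A -> K) : Prop :=
  [/\ (forall a, bdd_lin_fun (D a)),
      (forall (k : K) a b x, D (k *: a + b) x = k * D a x + D b x),
      (exists C : K, forall a x, `|D a x| <= C * `|a| * `|x|) &
      (forall a b x, D (mul a b) x = D a (mul b x) + D b (mul x a))].

(* j_A o D : A -> sigma wc(A)^* is w*-w* continuous *)
Definition jD_wstar_cont (D : A -> A -> K) : Prop :=
  forall (I : Type) (le : I -> I -> Prop) (u : I -> A) (a : A),
    directed le -> wconv le u a ->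
    forall x, sigmawcA x -> net_conv le (fun i => D (u i) x) (D a x).

(* j_A o D is inner: there is psi in sigma wc(A)^* (a bounded linear functional
   on the closed subspace sigma wc(A)) with
   j_A(D a) = a . psi - psi . a, i.e. D a x = psi (x a) - psi (a x). *)
Definition jD_inner (D : A -> A -> K) : Prop :=
  exists psi : A -> K,
    [/\ (forall (k : K) x y, sigmawcA x -> sigmawcA y ->
           psi (k *: x + y) = k * psi x + psi y),
        (exists C : K, forall x, sigmawcA x -> `|psi x| <= C * `|x|) &
        (forall a x, sigmawcA x -> D a x = psi (mul x a) - psi (mul a x))].

Definition weakly_connes_amenable : Prop :=
  forall D : A -> A -> K,
    derivation_to_dual D -> jD_wstar_cont D -> jD_inner D.

(* (A ⊗^ A)^* is (isometrically) the space of bounded bilinear forms on A x A;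
   F is bounded by M iff |F b c| <= M ||b|| ||c||. *)
Definition bilin_bounded_by (F : A -> A -> K) (M : K) : Prop :=
  forall b c, `|F b c| <= M * `|b| * `|c|.

Definition bdd_bilin (F : A -> A -> K) : Prop :=
  [/\ (forall (k : K) a b c, F (k *: a + b) c = k * F a c + F b c),
      (forall (k : K) a b c, F c (k *: a + b) = k * F c a + F c b) &
      exists M, bilin_bounded_by F M].

(* bimodule actions on (A ⊗^ A)^*, dual to a.(b⊗c) = ab⊗c, (b⊗c).a = b⊗ca *)
Definition lact_E (a : A) (F : A -> A -> K) : A -> A -> K := fun b c => F b (mul c a).
Definition ract_E (F : A -> A -> K) (a : A) : A -> A -> K := fun b c => F (mul a b) c.

(* elements of ((A ⊗^ A)^* )^* : bounded linear functionals on the Banach space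
   of bounded bilinear forms (with its norm ||F|| = inf of the bounds M) *)
Definition bdd_lin_funE (Phi : (A -> A -> K) -> K) : Prop :=
  (forall (k : K) F G, bdd_bilin F -> bdd_bilin G ->
      Phi (fun b c => k * F b c + G b c) = k * Phi F + Phi G) /\
  exists C : K, 0 <= C /\
    forall F M, bdd_bilin F -> bilin_bounded_by F M -> `|Phi F| <= C * M.

Definition sigmawcE (F : A -> A -> K) : Prop :=
  bdd_bilin F /\
  forall (I : Type) (le : I -> I -> Prop) (u : I -> A) (a : A),
    directed le -> wconv le u a ->
    forall Phi, bdd_lin_funE Phi ->
      net_conv le (fun i => Phi (lact_E (u i) F)) (Phi (lact_E a F)) /\
      net_conv le (fun i => Phi (ract_E F (u i))) (Phi (ract_E F a)).

(* an element m = sum_n x_n ⊗ y_n of the projective tensor product, with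
   sum_n ||x_n|| ||y_n|| < oo *)
Definition proj_tensor (x y : nat -> A) : Prop :=
  cvgn (series ((fun n => `|x n| * `|y n|) : nat -> K^o)).

Definition tpair (F : A -> A -> K) (x y : nat -> A) : K :=
  limn (series ((fun n => F (x n) (y n)) : nat -> K^o)).

Definition tpi (x y : nat -> A) : A :=
  limn (series (fun n => mul (x n) (y n))).

(* pseudo Connes amenability: a net (m_i) in A ⊗^ A with
   a . zeta(m_i) - zeta(m_i) . a -> 0 (w* in sigma wc((A⊗^A)^* )^* ) and
   a pi_{sigma wc}(zeta(m_i)) = a pi(m_i) -> a (w* in A).
   Here <a . zeta(m) - zeta(m) . a, F> = <F, a.m> - <F, m.a>, where
   a.(sum x_n⊗y_n) = sum (a x_n)⊗y_n and (sum x_n⊗y_n).a = sum x_n⊗(y_n a). *)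
Definition pseudo_connes_amenable : Prop :=
  exists (I : Type) (le : I -> I -> Prop) (x y : I -> nat -> A),
    [/\ directed le,
        (forall i, proj_tensor (x i) (y i)),
        (forall (a : A) (F : A -> A -> K), sigmawcE F ->
           net_conv le (fun i => tpair F (fun n => mul a (x i n)) (y i)
                               - tpair F (x i) (fun n => mul (y i n) a)) 0) &
        (forall a : A, wconv le (fun i => mul a (tpi (x i) (y i))) a)].

End Algebra.
End Defs.

(* Main.v *)
Require Import Defs.
From mathcomp Require Import all_boot all_order all_algebra.
From mathcomp Require Import all_classical all_reals all_analysis.
From mathcomp Require Import complex.
From mathcomp Require Import ring lra.
Import numFieldNormedType.Exports.
Import Order.TTheory GRing.Theory Num.Theory.
Local Open Scope ring_scope.
Local Open Scope complex_scope.

Set Implicit Arguments.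
Unset Strict Implicit.
Unset Printing Implicit Defensive.

Section Aux.
Variable R : realType.
Local Notation K := R[i].

Lemma net_conv_unique (I : Type) (le : I -> I -> Prop) (u : I -> K) l1 l2 :
  directed le -> net_conv le u l1 -> net_conv le u l2 -> l1 = l2.
Proof.
move=> [_ _ _ hub] h1 h2; apply/eqP; apply/negPn/negP => hne.
have he : 0 < `|l1 - l2| / 2 by rewrite divr_gt0 // normr_gt0 subr_eq0.
have [i1 hi1] := h1 _ he; have [i2 hi2] := h2 _ he.
have [k [k1 k2]] := hub i1 i2.
have := hi1 _ k1; have := hi2 _ k2 => a2 a1.
have : `|l1 - l2| < `|l1 - l2| / 2 + `|l1 - l2| / 2.
  apply: (le_lt_trans (y := `|u k - l1| + `|u k - l2|)).
    have -> : l1 - l2 = (u k - l2) - (u k - l1) by ring.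
    by rewrite (le_trans (ler_normB _ _)) // addrC.
  exact: ltrD.
by rewrite -splitr ltxx.
Qed.

Lemma net_conv_add (I : Type) (le : I -> I -> Prop) (u v : I -> K) l1 l2 :
  directed le -> net_conv le u l1 -> net_conv le v l2 ->
  net_conv le (fun i => u i + v i) (l1 + l2).
Proof.
move=> [_ _ htr hub] h1 h2 e he.
have he2 : 0 < e / 2 by rewrite divr_gt0.
have [i1 hi1] := h1 _ he2; have [i2 hi2] := h2 _ he2.
have [k [k1 k2]] := hub i1 i2.
exists k => i hki.
have -> : u i + v i - (l1 + l2) = (u i - l1) + (v i - l2) by ring.
rewrite (le_lt_trans (ler_normD _ _)) // [X in _ < X]splitr.
by apply: ltrD; [apply: hi1; apply: htr k1 hki | apply: hi2; apply: htr k2 hki].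
Qed.

Lemma net_conv_ext (I : Type) (le : I -> I -> Prop) (u v : I -> K) l :
  (forall i, u i = v i) -> net_conv le u l -> net_conv le v l.
Proof. by move=> huv h e he; have [i0 hi0] := h e he; exists i0 => i /hi0; rewrite huv. Qed.

Lemma bound_norm (V : normedModType K) (f : V -> K) (C : K) :
  (forall x, `|f x| <= C * `|x|) -> forall x, `|f x| <= `|C| * `|x|.
Proof.
move=> h x; have hx := h x.
have h0 : 0 <= C * `|x| by apply: le_trans hx.
have -> : `|C| * `|x| = `|C * `|x| | by rewrite normrM normr_id.
by rewrite (ger0_norm h0).
Qed.

Lemma lin0 (V : normedModType K) (f : V -> K) :
  (forall (k : K) x y, f (k *: x + y) = k * f x + f y) -> f 0 = 0.
Proof.
move=> h; have := h 1 0 0; rewrite scaler0 addr0 mul1r => /eqP.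
by rewrite -subr_eq0 opprD addrA subrr sub0r oppr_eq0 => /eqP.
Qed.


Lemma linD (V : normedModType K) (f : V -> K) :
  (forall (k : K) x y, f (k *: x + y) = k * f x + f y) -> forall x y, f (x + y) = f x + f y.
Proof. by move=> h x y; have := h 1 x y; rewrite scale1r mul1r. Qed.

Lemma linZ (V : normedModType K) (f : V -> K) :
  (forall (k : K) x y, f (k *: x + y) = k * f x + f y) -> forall k x, f (k *: x) = k * f x.
Proof. by move=> h k x; have := h k x 0; rewrite addr0 (lin0 h) addr0. Qed.

Lemma linN (V : normedModType K) (f : V -> K) :
  (forall (k : K) x y, f (k *: x + y) = k * f x + f y) -> forall x, f (- x) = - f x.
Proof. by move=> h x; rewrite -scaleN1r (linZ h) mulN1r. Qed.

Lemma linB (V : normedModType K) (f : V -> K) :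
  (forall (k : K) x y, f (k *: x + y) = k * f x + f y) -> forall x y, f (x - y) = f x - f y.
Proof. by move=> h x y; rewrite (linD h) (linN h). Qed.

Lemma archiK (e : K) : 0 < e -> exists n : nat, (n.+1%:R : K)^-1 < e.
Proof.
move=> he; have er : e \is Num.real := gtr0_real he.
set r := complex.Re e; have hre : e = r%:C by rewrite RRe_real.
have rpos : 0 < r by rewrite -ltcR rmorph0 -hre.
have rinv : 0 <= r^-1 by rewrite invr_ge0 ltW.
exists (Num.Def.archi_bound r^-1).
have -> : ((Num.Def.archi_bound r^-1).+1%:R : K)^-1 =
   (((Num.Def.archi_bound r^-1).+1%:R : R)^-1)%:C by rewrite fmorphV rmorph_nat.
rewrite hre ltcR invf_plt ?posrE ?ltr0Sn //.
apply: lt_trans (archi_boundP rinv) _.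
by rewrite ltr_nat.
Qed.

End Aux.

Section Series.
Variable R : realType.
Local Notation K := R[i].

Lemma aux_lt (c e : K) : 0 <= c -> 0 < e -> c * (e / (c + 1)) < e.
Proof.
move=> hc he; have hc1 : 0 < c + 1 by rewrite ltr_wpDl.
by rewrite mulrA ltr_pdivrMr // mulrDr mulr1 mulrC ltrDl.
Qed.

Lemma series_cmp (V : completeNormedModType K) (u : nat -> V) (v : nat -> K^o) (c : K) :
  0 <= c -> cvgn (series v) -> (forall n, `|u n| <= c * v n) -> cvgn (series u).
Proof.
move=> hc /cvg_cauchy /cauchy_seriesP hv huv.
apply/cauchy_cvgP/cauchy_seriesP => e he.
have hc1 : 0 < c + 1 by rewrite ltr_wpDl.
have := hv (e / (c + 1)) (divr_gt0 he hc1).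
apply: filterS => n h.
apply: le_lt_trans (ler_norm_sum _ _ _) _.
apply: le_lt_trans (ler_sum _ (fun k _ => huv k)) _.
rewrite -mulr_sumr.
have h0 : 0 <= c * \sum_(n.1 <= k < n.2) v k.
  rewrite mulr_sumr; apply: sumr_ge0 => k _; exact: le_trans (normr_ge0 _) (huv k).
rewrite -(ger0_norm h0) normrM (ger0_norm hc).
apply: le_lt_trans (aux_lt hc he).
by rewrite ler_wpM2l // ltW.
Qed.

Lemma lin_cvg (V : normedModType K) (T : V -> K^o) (C : K) (s : nat -> V) (l : V) :
  (forall a b, T (a - b) = T a - T b) -> (forall v, `|T v| <= C * `|v|) ->
  (s @ \oo --> l)%classic -> ((fun n => T (s n)) @ \oo --> T l)%classic.
Proof.
move=> hB hC /cvgrPdist_lt hs; apply/cvgrPdist_lt => e he.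
have hC0 : 0 <= `|C| by [].
have hc1 : 0 < `|C| + 1 by rewrite ltr_wpDl.
have := hs (e / (`|C| + 1)) (divr_gt0 he hc1).
apply: filterS => n h.
rewrite -hB; apply: le_lt_trans (bound_norm hC _) _.
apply: le_lt_trans (aux_lt hC0 he).
by rewrite ler_wpM2l // ltW.
Qed.

End Series.

Section Main.
Variable R : realType.
Local Notation K := R[i].
Variables (A P : completeNormedModType K) (pr : A -> P -> K) (mul : A -> A -> A).
Hypothesis hba : banach_algebra mul.
Hypothesis hpre : is_predual pr.
Hypothesis hcomm : commutative_alg mul.

Lemma mulA a b c : mul (mul a b) c = mul a (mul b c).
Proof. by case: hba. Qed.
Lemma mulC a b : mul a b = mul b a.
Proof. exact: hcomm. Qed.
Lemma mullin (k : K) a b c : mul (k *: a + b) c = k *: mul a c + mul b c.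
Proof. by case: hba. Qed.
Lemma mulrlin (k : K) a b c : mul c (k *: a + b) = k *: mul c a + mul c b.
Proof. by case: hba. Qed.
Lemma mulnorm a b : `|mul a b| <= `|a| * `|b|.
Proof. by case: hba. Qed.

Lemma mul0l c : mul 0 c = 0.
Proof.
have := mullin 1 0 0 c; rewrite scaler0 addr0 scale1r => /eqP.
by rewrite -subr_eq0 opprD addrA subrr sub0r oppr_eq0 => /eqP.
Qed.
Lemma mul0r c : mul c 0 = 0.
Proof. by rewrite mulC mul0l. Qed.
Lemma mulDl a b c : mul (a + b) c = mul a c + mul b c.
Proof. by have := mullin 1 a b c; rewrite !scale1r. Qed.
Lemma mulDr a b c : mul c (a + b) = mul c a + mul c b.
Proof. by rewrite !(mulC c) mulDl. Qed.
Lemma mulZl k a c : mul (k *: a) c = k *: mul a c.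
Proof. by have := mullin k a 0 c; rewrite !addr0 mul0l addr0. Qed.
Lemma mulZr k a c : mul c (k *: a) = k *: mul c a.
Proof. by rewrite !(mulC c) mulZl. Qed.
Lemma mulNl a c : mul (- a) c = - mul a c.
Proof. by rewrite -scaleN1r mulZl scaleN1r. Qed.
Lemma mulBl a b c : mul (a - b) c = mul a c - mul b c.
Proof. by rewrite mulDl mulNl. Qed.

Lemma pr1 (k : K) a b p : pr (k *: a + b) p = k * pr a p + pr b p.
Proof. by case: hpre. Qed.
Lemma pr2 (k : K) a p q : pr a (k *: p + q) = k * pr a p + pr a q.
Proof. by case: hpre. Qed.
Lemma pr0l p : pr 0 p = 0.
Proof. exact: (lin0 (fun k a b => pr1 k a b p)). Qed.
Lemma pr0r a : pr a 0 = 0.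
Proof. exact: (lin0 (fun k p q => pr2 k a p q)). Qed.
Lemma prZl k a p : pr (k *: a) p = k * pr a p.
Proof. exact: (linZ (fun k a b => pr1 k a b p)). Qed.
Lemma prBl a b p : pr (a - b) p = pr a p - pr b p.
Proof. exact: (linB (fun k a b => pr1 k a b p)). Qed.
Lemma prD2 a p q : pr a (p + q) = pr a p + pr a q.
Proof. exact: (linD (fun k p q => pr2 k a p q)). Qed.
Lemma prZ2 k a p : pr a (k *: p) = k * pr a p.
Proof. exact: (linZ (fun k p q => pr2 k a p q)). Qed.

Definition islin (f : A -> K) := forall (k : K) x y, f (k *: x + y) = k * f x + f y.

Lemma bdd_mul (phi : A -> K) c : bdd_lin_fun phi -> bdd_lin_fun (fun v => phi (mul c v)).
Proof.
case=> hl [C hC]; split.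
  by move=> k x y /=; rewrite mulrlin hl.
exists (`|C| * `|c|) => x.
apply: le_trans (bound_norm hC _) _.
rewrite -mulrA ler_wpM2l //; exact: mulnorm.
Qed.

Lemma sigmawc_mull x c : sigmawcA pr mul x -> sigmawcA pr mul (mul c x).
Proof.
move=> hx I le u a hd hu phi hphi.
have [h1 h2] := hx I le u a hd hu _ (bdd_mul c hphi).
split.
  apply: (net_conv_ext (u := fun i => phi (mul c (mul (u i) x)))).
    by move=> i; rewrite -mulA (mulC c) mulA.
  have -> : mul a (mul c x) = mul c (mul a x) by rewrite -mulA (mulC a) mulA.
  exact: h1.
apply: (net_conv_ext (u := fun i => phi (mul c (mul x (u i))))).
  by move=> i; rewrite mulA.
rewrite mulA; exact: h2.
Qed.

Lemma rep_fin (L : seq P) (psi : A -> K) : islin psi ->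
  (forall a, (forall p, p \in L -> pr a p = 0) -> psi a = 0) ->
  exists q, forall a, psi a = pr a q.
Proof.
elim: L psi => [|p L IH] psi hlin hker.
  by exists 0 => a; rewrite pr0r; apply: hker => p; rewrite in_nil.
case: (pselect (exists a0, (forall p', p' \in L -> pr a0 p' = 0) /\ pr a0 p != 0)).
  case=> a0 [h0L h0p]; set c := psi a0 / pr a0 p.
  have hl : islin (fun a => psi a - c * pr a p).
    by move=> k x y /=; rewrite hlin pr1; ring.
  have hk : forall b, (forall p', p' \in L -> pr b p' = 0) -> psi b - c * pr b p = 0.
    move=> b hb /=; set t := pr b p / pr a0 p.
    have hz : psi (b - t *: a0) = 0.
      apply: hker => p'; rewrite inE => /orP [/eqP -> | hp'].
        rewrite prBl prZl /t; field; exact: h0p.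
      by rewrite prBl prZl hb // h0L // mulr0 subr0.
    move: hz; rewrite (linB hlin) (linZ hlin) => hz.
    have -> : psi b = t * psi a0 by apply/eqP; rewrite -subr_eq0 hz.
    rewrite /t /c; field; exact: h0p.
  have [q' hq'] := IH _ hl hk.
  exists (q' + c *: p) => a; rewrite addrC pr2 -hq' /= -/c.
  by ring.
move=> hno; apply: IH => // a haL; apply: hker => p'.
rewrite inE => /orP [/eqP -> | ]; last exact: haL.
case: (pselect (pr a p = 0)) => // hne; exfalso; apply: hno.
by exists a; split => //; apply/eqP.
Qed.


Definition wcont (psi : A -> K) := forall (I : Type) (le : I -> I -> Prop) (u : I -> A) (a : A),
  directed le -> wconv pr le u a -> net_conv le (fun i => psi (u i)) (psi a).

Lemma rep_cont psi : islin psi -> wcont psi -> exists q, forall a, psi a = pr a q.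
Proof.
move=> hlin hc.
suff [L [n hn]] : exists (L : seq P) (n : nat), forall a,
    (forall p, p \in L -> `|pr a p| < (n.+1%:R : K)^-1) -> `|psi a| < 1.
  apply: (rep_fin (L := L) hlin) => a ha.
  case: (pselect (psi a = 0)) => // hne; exfalso.
  have hne' : psi a != 0 by apply/eqP.
  have h1 : forall p, p \in L -> `|pr ((psi a)^-1 *: a) p| < (n.+1%:R : K)^-1.
    by move=> p hp; rewrite prZl (ha p hp) mulr0 normr0 invr_gt0 ltr0Sn.
  by have := hn _ h1; rewrite (linZ hlin) (mulVf hne') normr1 ltxx.
case: (pselect (exists (L : seq P) (n : nat), forall a,
    (forall p, p \in L -> `|pr a p| < (n.+1%:R : K)^-1) -> `|psi a| < 1)) => // hno.
exfalso.
have hall : forall i : seq P * nat, exists a,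
    (forall p, p \in i.1 -> `|pr a p| < (i.2.+1%:R : K)^-1) /\ ~ (`|psi a| < 1).
  move=> [L n]; case: (pselect (exists a, (forall p, p \in L -> `|pr a p| < (n.+1%:R : K)^-1)
        /\ ~ (`|psi a| < 1))) => // hno2; exfalso; apply: hno.
  exists L, n => a ha; case: (pselect (`|psi a| < 1)) => // hlt; exfalso.
  by apply: hno2; exists a.
have [f hf] := choice hall.
pose le (i j : seq P * nat) := {subset i.1 <= j.1} /\ (i.2 <= j.2)%N.
have hd : directed le.
  split.
  - exact: (inhabits ([::], 0%N)).
  - by move=> i; split.
  - move=> i j k [h1 h2] [h3 h4]; split; first by move=> x /h1 /h3.
    exact: leq_trans h4.
  - move=> i j; exists (i.1 ++ j.1, maxn i.2 j.2); split; split => /=.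
    + by move=> x hx; rewrite mem_cat hx.
    + exact: leq_maxl.
    + by move=> x hx; rewrite mem_cat hx orbT.
    + exact: leq_maxr.
have hw : wconv pr le f 0.
  move=> p e he; have [n hn] := archiK he.
  exists ([:: p], n) => i [hi1 hi2].
  rewrite pr0l subr0.
  have hpi : p \in i.1 by apply: hi1; rewrite inE eqxx.
  apply: lt_le_trans ((hf i).1 p hpi) _.
  apply: le_trans (ltW hn).
  rewrite lef_pV2 ?posrE ?ltr0Sn // ler_nat ltnS; exact: hi2.
have := hc _ le f 0 hd hw.
rewrite (lin0 hlin) => /(_ 1 ltr01) [i0 hi0].
have := hi0 i0 (conj (fun x (h : x \in i0.1) => h) (leqnn _)).
by rewrite subr0 => h; apply: (hf i0).2.
Qed.

Lemma lin_series (T : A -> K) (u : nat -> A) n : islin T ->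
  T (series u n) = series ((fun k => T (u k)) : nat -> K^o) n.
Proof.
move=> hT; rewrite /series /=; elim: n => [|n IH].
  by rewrite !big_geq // (lin0 hT).
by rewrite !big_nat_recr //= (linD hT) IH.
Qed.


Lemma series_cmpK (a0 : A) (p : P) (u v : nat -> K^o) (c : K) : pr a0 p != 0 ->
  0 <= c -> cvgn (series v) -> (forall n, `|u n| <= c * v n) -> cvgn (series u).
Proof.
move=> hne hc hv huv.
set w := fun n => u n *: a0.
set phi := fun a => pr a p / pr a0 p.
have hphi : islin phi by move=> k a b; rewrite /phi pr1; field.
have hw : cvgn (series w).
  apply: (series_cmp (c := c * `|a0|) _ hv) => [|n]; first by rewrite mulr_ge0.
  rewrite /w normrZ mulrAC ler_wpM2r //.
have e : series u = (fun n => phi (series w n)).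
  apply: funext => n; rewrite (lin_series _ n hphi); congr (series _ n).
  by apply: funext => k; rewrite /phi /w prZl; field.
rewrite e; apply: cvgP.
apply: (lin_cvg (C := `|p| / `|pr a0 p|) (linB hphi) _ hw) => a.
case: hpre => _ _ hb _ _.
rewrite /phi normrM normfV.
have hpos : 0 < `|pr a0 p| by rewrite normr_gt0.
rewrite ler_pdivrMr // mulrAC divfK ?normr_eq0 //.
by rewrite mulrC.
Qed.

Section Der.
Variable D : A -> A -> K.
Hypothesis hD : derivation_to_dual mul D.
Hypothesis hjD : jD_wstar_cont pr mul D.

Lemma Dfun a : bdd_lin_fun (D a).
Proof. by case: hD. Qed.
Lemma Dlin1 (k : K) a b x : D (k *: a + b) x = k * D a x + D b x.
Proof. by case: hD. Qed.
Lemma Dder a b x : D (mul a b) x = D a (mul b x) + D b (mul x a).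
Proof. by case: hD. Qed.
Lemma Dlin2 a : islin (D a).
Proof. by case: (Dfun a). Qed.

Lemma Dbound : exists C0, 0 <= C0 /\ forall a x, `|D a x| <= C0 * `|a| * `|x|.
Proof.
case: hD => _ _ [C hC] _; exists `|C|; split => // a x.
have h := hC a x.
have h0 : 0 <= C * (`|a| * `|x|) by rewrite mulrA; apply: le_trans h.
have -> : `|C| * `|a| * `|x| = `|C * (`|a| * `|x|)| by rewrite !normrM !normr_id mulrA.
by rewrite (ger0_norm h0) mulrA.
Qed.

Definition Lf (v : A) := fun b c => D b (mul c v).
Definition Gp (p : P) := fun b c => pr (mul b c) p.

Lemma bdd_L v : bdd_bilin (Lf v).
Proof.
have [C0 [hC0 hC]] := Dbound.
split.
- by move=> k a b c; rewrite /Lf Dlin1.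
- by move=> k a b c; rewrite /Lf mullin (Dlin2 c).
exists (C0 * `|v|) => b c; rewrite /Lf.
apply: le_trans (hC _ _) _.
have := mulnorm c v => h.
rewrite -(mulrA C0 `|v|) (mulrC `|v|) -!mulrA ler_wpM2l // ler_wpM2l //.
by rewrite mulrC.
Qed.

Lemma bdd_G p : bdd_bilin (Gp p).
Proof.
case: hpre => _ _ hb _ _.
split.
- by move=> k a b c; rewrite /Gp mullin pr1.
- by move=> k a b c; rewrite /Gp mulrlin pr1.
exists `|p| => b c; rewrite /Gp.
apply: le_trans (hb _ _) _.
have -> : `|p| * `|b| * `|c| = `|b| * `|c| * `|p| by ring.
rewrite ler_wpM2r //; exact: mulnorm.
Qed.

Lemma PhiL_fun Phi : bdd_lin_funE Phi -> bdd_lin_fun (fun v => Phi (Lf v)).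
Proof.
move=> [hl [C' [hC'0 hC']]]; have [C0 [hC0 hC]] := Dbound.
split.
  move=> k v w.
  have -> : Lf (k *: v + w) = fun b c => k * Lf v b c + Lf w b c.
    by apply: funext => b; apply: funext => c; rewrite /Lf mulrlin Dlin2.
  by rewrite hl //; apply: bdd_L.
exists (C' * C0) => v.
have [_ _ [M hM]] := bdd_L v.
rewrite -mulrA; apply: hC'; first exact: bdd_L.
move=> b c; rewrite /Lf.
apply: le_trans (hC _ _) _.
have := mulnorm c v => h.
rewrite -(mulrA C0 `|v|) (mulrC `|v|) -!mulrA ler_wpM2l // ler_wpM2l //.
by rewrite mulrC.
Qed.

Lemma Phi_rep Phi : bdd_lin_funE Phi -> exists z, forall p, Phi (Gp p) = pr z p.
Proof.
move=> [hl [C' [hC'0 hC']]].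
case: hpre => _ _ _ _ hsurj.
have hf : bdd_lin_fun (fun p => Phi (Gp p)).
  split.
    move=> k p q.
    have -> : Gp (k *: p + q) = fun b c => k * Gp p b c + Gp q b c.
      by apply: funext => b; apply: funext => c; rewrite /Gp pr2.
    by rewrite hl //; apply: bdd_G.
  exists C' => p; apply: hC'; first exact: bdd_G.
  case: hpre => _ _ hb _ _.
  move=> b c; rewrite /Gp; apply: le_trans (hb _ _) _.
  have -> : `|p| * `|b| * `|c| = `|b| * `|c| * `|p| by ring.
  rewrite ler_wpM2r //; exact: mulnorm.
have [z hz] := hsurj _ hf.
by exists z => p; rewrite hz.
Qed.


Lemma lactL x w : lact_E mul w (Lf x) = Lf (mul w x).
Proof. by apply: funext => b; apply: funext => c; rewrite /lact_E /Lf mulA. Qed.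

Lemma psi_rep x w : sigmawcA pr mul x -> exists q, forall v, D w (mul v x) = pr v q.
Proof.
move=> hx; apply: rep_cont.
  by move=> k v v'; rewrite mullin (Dlin2 w).
move=> I le u a hd hu; have [h1 _] := hx I le u a hd hu (D w) (Dfun w); exact: h1.
Qed.

Lemma ractL x w Phi z : sigmawcA pr mul x -> bdd_lin_funE Phi ->
  (forall p, Phi (Gp p) = pr z p) ->
  Phi (ract_E mul (Lf x) w) = D w (mul z x) + Phi (Lf (mul x w)).
Proof.
move=> hx [hl _] hz; have [q hq] := psi_rep w hx.
have -> : ract_E mul (Lf x) w = fun b c => 1 * Gp q b c + Lf (mul x w) b c.
  apply: funext => b; apply: funext => c.
  by rewrite /ract_E /Lf /Gp Dder mul1r -hq !mulA.
by rewrite hl ?mul1r ?hz -?hq //; [apply: bdd_G | apply: bdd_L].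
Qed.

Lemma F_sigma x : sigmawcA pr mul x -> sigmawcE pr mul (Lf x).
Proof.
move=> hx; split; first exact: bdd_L.
move=> I le u a hd hu Phi hPhi.
have hPL := PhiL_fun hPhi.
have [h1 h2] := hx I le u a hd hu _ hPL.
have [z hz] := Phi_rep hPhi.
split.
  apply: (net_conv_ext (u := fun i => Phi (Lf (mul (u i) x)))).
    by move=> i; rewrite lactL.
  by rewrite lactL; exact: h1.
apply: (net_conv_ext (u := fun i => D (u i) (mul z x) + Phi (Lf (mul x (u i))))).
  by move=> i; rewrite (ractL _ hx hPhi hz).
rewrite (ractL _ hx hPhi hz); apply: net_conv_add => //.
by apply: hjD => //; apply: sigmawc_mull.
Qed.
Lemma tpair_diff a0 p0 x a (xs ys : nat -> A) : pr a0 p0 != 0 -> proj_tensor xs ys ->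
  tpair (Lf x) (fun n => mul a (xs n)) ys - tpair (Lf x) xs (fun n => mul (ys n) a)
  = D a (mul (tpi mul xs ys) x).
Proof.
move=> hne hp.
have [C0 [hC0 hC]] := Dbound.
set f := (fun n => Lf x (mul a (xs n)) (ys n)) : nat -> K^o.
set g := (fun n => Lf x (xs n) (mul (ys n) a)) : nat -> K^o.
set m := fun n => mul (xs n) (ys n).
set T := fun v => D a (mul v x).
have hc : 0 <= C0 * `|a| * `|x| by rewrite !mulr_ge0.
have hf : cvgn (series f).
  apply: (series_cmpK hne hc hp) => n; rewrite /f /Lf.
  apply: le_trans (hC _ _) _.
  have h1 := mulnorm a (xs n); have h2 := mulnorm (ys n) x.
  have -> : C0 * `|a| * `|x| * (`|xs n| * `|ys n|) = C0 * (`|a| * `|xs n|) * (`|ys n| * `|x|) by ring.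
  by apply: ler_pM; rewrite ?mulr_ge0 // ler_wpM2l.
have hg : cvgn (series g).
  apply: (series_cmpK hne hc hp) => n; rewrite /g /Lf.
  apply: le_trans (hC _ _) _.
  have h1 := mulnorm (mul (ys n) a) x; have h2 := mulnorm (ys n) a.
  have -> : C0 * `|a| * `|x| * (`|xs n| * `|ys n|) = C0 * `|xs n| * (`|ys n| * `|a| * `|x|) by ring.
  apply: ler_wpM2l; first by rewrite mulr_ge0.
  by apply: le_trans h1 _; apply: ler_wpM2r.
have hm : cvgn (series m).
  apply: (series_cmp (c := 1) ler01 hp) => n; rewrite mul1r; exact: mulnorm.
have hTlin : islin T by move=> k v w; rewrite /T mullin (Dlin2 a).
have hTcvg := lin_cvg (C := C0 * `|a| * `|x|) (linB hTlin) _ hm.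
have hTb : forall v, `|T v| <= C0 * `|a| * `|x| * `|v|.
  move=> v; rewrite /T; apply: le_trans (hC _ _) _.
  have -> : C0 * `|a| * `|x| * `|v| = C0 * `|a| * (`|v| * `|x|) by ring.
  apply: ler_wpM2l; [by rewrite mulr_ge0 | exact: mulnorm].
have h2 := hTcvg hTb.
have h1 := cvgB hf hg.
have e : (series f - series g)%R = (fun n => T (series m n)).
  apply: funext => n; rewrite (lin_series _ n hTlin) /=.
  have -> : (series f - series g)%R n = series f n - series g n by [].
  rewrite /series /= -sumrB; apply: eq_bigr => k _.
  rewrite /f /g /T /m /Lf Dder.
  have -> : mul (mul (ys k) x) a = mul (mul (ys k) a) x by rewrite !mulA (mulC x a).
  by rewrite addrK mulA.
rewrite e in h1.
have := cvg_unique (@norm_hausdorff _ K^o) (h1 _) h2.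
rewrite /tpair /tpi; apply; exact: _.
Qed.

Section Net.
Variables (I : Type) (le : I -> I -> Prop) (xs ys : I -> nat -> A).
Hypothesis hd : directed le.
Hypothesis hpt : forall i, proj_tensor (xs i) (ys i).
Hypothesis hcond : forall (a : A) (F : A -> A -> K), sigmawcE pr mul F ->
  net_conv le (fun i => tpair F (fun n => mul a (xs i n)) (ys i)
                      - tpair F (xs i) (fun n => mul (ys i n) a)) 0.
Hypothesis hpi : forall a : A, wconv pr le (fun i => mul a (tpi mul (xs i) (ys i))) a.
Variables (a0 : A) (p0 : P).
Hypothesis hne : pr a0 p0 != 0.

Lemma step1 a x : sigmawcA pr mul x ->
  net_conv le (fun i => D a (mul (tpi mul (xs i) (ys i)) x)) 0.
Proof.
move=> hx; apply: (net_conv_ext _ (hcond a (F_sigma hx))) => i.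
exact: (tpair_diff _ _ hne).
Qed.

Lemma step2 b c x : sigmawcA pr mul x -> D b (mul c x) = 0.
Proof.
move=> hx.
have [h1 _] := hx I le _ _ hd (hpi c) (D b) (Dfun b).
have h2 := step1 b (sigmawc_mull c hx).
apply: (net_conv_unique hd h1).
apply: (net_conv_ext _ h2) => i /=.
by rewrite -mulA (mulC (tpi _ _ _) c).
Qed.

Lemma step3 b x : sigmawcA pr mul x -> D b x = 0.
Proof.
move=> hx.
have h1 := hjD hd (hpi b) hx.
apply: (net_conv_unique hd h1).
apply: (net_conv_ext (u := fun _ => 0)).
  by move=> i; rewrite Dder step2 // (mulC x b) step2 // addr0.
case: hd => [[i0] _ _ _]; by move=> e he; exists i0 => i _; rewrite subr0 normr0.
Qed.
End Net.
End Der.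
End Main.

Theorem corollary3p12 (R : realType) (A P : completeNormedModType R[i])
    (pr : A -> P -> R[i]) (mul : A -> A -> A) :
  dual_banach_algebra pr mul ->
  commutative_alg mul ->
  pseudo_connes_amenable pr mul ->
  weakly_connes_amenable pr mul.
Proof.
move=> [hba hpre _] hcomm [I [le [xs [ys [hd hpt hcond hpi]]]]] D hD hjD.
exists (fun _ => 0); split.
- by move=> k x y _ _; rewrite mulr0 addr0.
- by exists 0 => x _; rewrite normr0 GRing.mul0r.
move=> a x hx; rewrite subrr.
case: (pselect (exists a0 : A, a0 != 0)).
  case=> a0 ha0.
  have [p0 [_ hp0]] : exists p, `|p| <= 1 /\ `|a0| - `|a0| < `|pr a0 p|.
    by case: hpre => _ _ _ h _; apply: h; rewrite normr_gt0.
  have hne : pr a0 p0 != 0 by rewrite -normr_gt0 -(subrr `|a0|).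
  exact: (step3 hba hpre hcomm hD hjD hd hpt hcond hpi hne).
move=> hno.
have -> : x = 0.
  by case: (pselect (x = 0)) => // /eqP hx0; exfalso; apply: hno; exists x.
by case: hD => hf _ _ _; case: (hf a) => hl _; apply: (lin0 hl).
Qed.
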